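(* If there exist a CMDRR$(n,k)$, a SAMDRR$(m)$, and two mutually orthogonal latin squares of order $n$, then there exists a CMDRR$(mn, mk)$.
   Context: A mixed doubles game is a match between two teams, each team consisting of one man and one woman; in a game $M_a F_b$ v $M_c F_d$, $M_a$ and $F_b$ are partners, $M_c$ and $F_d$ are partners, and each player of one team opposes each player of the other team. A complete mixed doubles round robin tournament CMDRR$(n,k)$ is a schedule (set) of mixed doubles games for $n$ men and $n$ women, of which $k$ men and $k$ women are paired into $k$ spouse pairs (a spouse pair is one man and one woman), such that: spouses never play in a game together as partners or opponents; every man and woman who are not spouses are partners exactly once and opponents exactly once; each player who has a spouse opposes every other player of the same sex exactly once; each player who does not have a spouse opposes some other same-sex player who does not have a spouse exactly twice and opposes all other same-sex players exactly once. A spouse-avoiding mixed doubles round robin tournament SAMDRR$(m)$ is a schedule of mixed doubles games for $m$ husband-and-wife couples in which spouses never play in a game together as partners or opponents, every man and woman who are not spouses are partners exactly once and opponents exactly once, and every pair of players of the same sex are opponents exactly once (i.e. a CMDRR$(m,m)$). *)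

(* Defs.v *)
From mathcomp Require Import all_boot.
Set Implicit Arguments. Unset Strict Implicit. Unset Printing Implicit Defensive.

(* A mixed doubles game  M_a F_b  v  M_c F_d  among n men and n women,
   both indexed by 'I_n. *)
Record mdgame (n : nat) := MDGame {
  gm1 : 'I_n;
  gw1 : 'I_n;
  gm2 : 'I_n;
  gw2 : 'I_n
}.

Definition spouse (n k : nat) (i j : 'I_n) : bool := (i == j) && (i < k).

Definition partners n (g : mdgame n) (i j : 'I_n) : bool :=
  ((gm1 g == i) && (gw1 g == j)) || ((gm2 g == i) && (gw2 g == j)).

Definition opp_mw n (g : mdgame n) (i j : 'I_n) : bool :=
  ((gm1 g == i) && (gw2 g == j)) || ((gm2 g == i) && (gw1 g == j)).

Definition opp_mm n (g : mdgame n) (i i' : 'I_n) : bool :=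
  ((gm1 g == i) && (gm2 g == i')) || ((gm2 g == i) && (gm1 g == i')).

Definition opp_ww n (g : mdgame n) (j j' : 'I_n) : bool :=
  ((gw1 g == j) && (gw2 g == j')) || ((gw2 g == j) && (gw1 g == j')).

Definition game_ok n k (g : mdgame n) : bool :=
  [&& gm1 g != gm2 g, gw1 g != gw2 g,
      ~~ spouse k (gm1 g) (gw1 g), ~~ spouse k (gm2 g) (gw2 g),
      ~~ spouse k (gm1 g) (gw2 g) & ~~ spouse k (gm2 g) (gw1 g)].

Definition is_CMDRR (n k : nat) (S : seq (mdgame n)) : Prop :=
  [/\ k <= n, all (game_ok k) S &
   [/\ (forall i j : 'I_n, ~~ spouse k i j ->
          count (fun g => partners g i j) S = 1 /\
          count (fun g => opp_mw g i j) S = 1),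
      (forall i i' : 'I_n, i < k -> i' != i ->
          count (fun g => opp_mm g i i') S = 1),
      (forall j j' : 'I_n, j < k -> j' != j ->
          count (fun g => opp_ww g j j') S = 1),
      (forall i : 'I_n, k <= i -> exists i' : 'I_n,
          [/\ k <= i', i' != i, count (fun g => opp_mm g i i') S = 2 &
              forall i'' : 'I_n, i'' != i -> i'' != i' ->
                count (fun g => opp_mm g i i'') S = 1])
    & (forall j : 'I_n, k <= j -> exists j' : 'I_n,
          [/\ k <= j', j' != j, count (fun g => opp_ww g j j') S = 2 &
              forall j'' : 'I_n, j'' != j -> j'' != j' ->
                count (fun g => opp_ww g j j'') S = 1])]].

Definition CMDRR_exists (n k : nat) : Prop := exists S : seq (mdgame n), @is_CMDRR n k S.

Definition SAMDRR_exists (m : nat) : Prop := CMDRR_exists m m.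

Definition latin_square n (L : 'I_n -> 'I_n -> 'I_n) : Prop :=
  (forall r, injective (L r)) /\ (forall c, injective (fun r => L r c)).

Definition orthogonal_ls n (L1 L2 : 'I_n -> 'I_n -> 'I_n) : Prop :=
  forall r c r' c', L1 r c = L1 r' c' -> L2 r c = L2 r' c' -> r = r' /\ c = c'.

Definition MOLS_pair_exists (n : nat) : Prop :=
  exists L1 L2 : 'I_n -> 'I_n -> 'I_n,
    [/\ latin_square L1, latin_square L2 & orthogonal_ls L1 L2].

(* Main.v *)
Require Import Defs.
From mathcomp Require Import all_boot zify.
Set Implicit Arguments. Unset Strict Implicit.

Lemma enc_proof m n (u : 'I_m) (x : 'I_n) : x * m + u < m * n.
Proof. have := ltn_ord u; have := ltn_ord x; nia. Qed.

Definition enc m n (u : 'I_m) (x : 'I_n) : 'I_(m*n) := Ordinal (enc_proof u x).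

Lemma enc_eq m n (u v : 'I_m) (x y : 'I_n) : (enc u x == enc v y) = (u == v) && (x == y).
Proof.
apply/eqP/andP => [/(congr1 val) /= E | [/eqP -> /eqP ->] //].
have m0 : 0 < m by apply: leq_ltn_trans (ltn_ord u).
have Eu : u = v :> nat.
  by have := congr1 (modn^~ m) E; rewrite !modnMDl !modn_small.
have Ex : x = y :> nat.
  by have := congr1 (divn^~ m) E; rewrite !divnMDl // !divn_small ?addn0.
by split; apply/eqP; apply/val_inj.
Qed.

Lemma enc_lt m n k (u : 'I_m) (x : 'I_n) : (enc u x < m * k) = (x < k).
Proof. rewrite /=; have := ltn_ord u; case: ltnP => h; nia. Qed.

Lemma enc_surj m n (i : 'I_(m*n)) : exists u x, i = @enc m n u x.
Proof.
have m0 : 0 < m by case: m i => [|//] [].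
have h1 : i %% m < m by rewrite ltn_pmod.
have h2 : i %/ m < n by rewrite ltn_divLR // [n * m]mulnC.
exists (Ordinal h1), (Ordinal h2); apply/val_inj => /=.

exact: divn_eq.
Qed.


Lemma count_or_excl (T : Type) (A B : pred T) s :
  (forall p, A p -> B p = false) ->
  count (fun p => A p || B p) s = count A s + count B s.
Proof.
move=> H; elim: s => //= p s ->.
case Ap: (A p); first by rewrite (H _ Ap) /=; lia.
by case: (B p) => /=; lia.
Qed.

Lemma count_inj1 n (F : 'I_n * 'I_n -> 'I_n * 'I_n) x y : injective F ->
  count (fun p => ((F p).1 == x) && ((F p).2 == y)) (enum {: 'I_n * 'I_n}) = 1.
Proof.
move=> /injF_bij [g Fg gF].
rewrite (@eq_count _ _ (pred1 (g (x, y)))); last first.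
  move=> p /=; apply/andP/eqP => [[/eqP e1 /eqP e2] | ->].
    by rewrite -[p]Fg -e1 -e2 -surjective_pairing.
  by rewrite gF.
by rewrite (count_uniq_mem _ (enum_uniq _)) mem_enum.
Qed.

Lemma count_false (T : Type) (s : seq T) : count (fun _ => false) s = 0.
Proof. by elim: s. Qed.

Lemma count_or m n (a1 b1 a2 b2 u v : 'I_m) (F1 F2 : 'I_n*'I_n -> 'I_n*'I_n) (x y : 'I_n) :
  injective F1 -> injective F2 -> a1 != a2 ->
  count (fun p => ((enc a1 (F1 p).1 == enc u x) && (enc b1 (F1 p).2 == enc v y))
          || ((enc a2 (F2 p).1 == enc u x) && (enc b2 (F2 p).2 == enc v y)))
        (enum {: 'I_n * 'I_n})
  = ((a1 == u) && (b1 == v)) || ((a2 == u) && (b2 == v)).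
Proof.
move=> i1 i2 na.
rewrite count_or_excl; last first.
  move=> p; rewrite !enc_eq => /andP[/andP[/eqP e1 _] _].
  by rewrite -e1 [a2 == a1]eq_sym (negbTE na).
rewrite (@eq_count _ _ (fun p => (a1 == u) && (b1 == v) && (((F1 p).1 == x) && ((F1 p).2 == y)))); last first.
  by move=> p; rewrite !enc_eq; case: (a1 == u); case: (b1 == v); rewrite ?andbF.
rewrite [X in _ + X](@eq_count _ _ (fun p => (a2 == u) && (b2 == v) && (((F2 p).1 == x) && ((F2 p).2 == y)))); last first.
  by move=> p; rewrite !enc_eq; case: (a2 == u); case: (b2 == v); rewrite ?andbF.
have e1 : (a1 == u) && (a2 == u) = false.
  by case: eqP => // <-; rewrite eq_sym (negbTE na).
case: (a1 == u) e1; case: (b1 == v); case: (a2 == u); case: (b2 == v) => //= _;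
  rewrite ?count_inj1 ?count_false //.
Qed.

Definition Gg m n (L1 L2 : 'I_n -> 'I_n -> 'I_n) (g : mdgame m) (p : 'I_n * 'I_n) : mdgame (m*n) :=
  MDGame (enc (gm1 g) p.1) (enc (gw1 g) p.2) (enc (gm2 g) (L1 p.1 p.2)) (enc (gw2 g) (L2 p.1 p.2)).
Definition Hg m n (a : 'I_m) (g : mdgame n) : mdgame (m*n) :=
  MDGame (enc a (gm1 g)) (enc a (gw1 g)) (enc a (gm2 g)) (enc a (gw2 g)).
Definition Tseq m n (L1 L2 : 'I_n -> 'I_n -> 'I_n) (S1 : seq (mdgame n)) (S2 : seq (mdgame m)) :=
  flatten [seq [seq Gg L1 L2 g p | p <- enum {: 'I_n * 'I_n}] | g <- S2]
  ++ flatten [seq [seq Hg a g | g <- S1] | a <- enum {: 'I_m}].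

Lemma sumn_map_P (T : Type) (s : seq T) (f : T -> nat) (Q P : pred T) c :
  all Q s -> (forall a, Q a -> f a = P a * c) -> sumn (map f s) = count P s * c.
Proof.
move=> + H; elim: s => //= a s IH /andP[Qa Qs].
by rewrite H // IH // mulnDl.
Qed.

Lemma count_T m n L1 L2 S1 S2 (R : forall N, mdgame N -> 'I_N -> 'I_N -> bool)
  (u v : 'I_m) (x y : 'I_n) :
  all (game_ok m) S2 ->
  (forall g, game_ok m g ->
     count (fun p => R _ (Gg L1 L2 g p) (enc u x) (enc v y)) (enum {: 'I_n*'I_n}) = R _ g u v) ->
  (forall a g, R _ (Hg a g) (enc u x) (enc v y) = ((a == u) && (a == v)) && R _ g x y) ->
  (forall g, game_ok m g -> R _ g u u = false) ->
  count (fun g => R _ g (enc u x) (enc v y)) (Tseq L1 L2 S1 S2)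
  = if u == v then count (fun g => R _ g x y) S1 else count (fun g => R _ g u v) S2.
Proof.
move=> ok2 HG HH Hd.
rewrite count_cat !count_flatten -!map_comp.
rewrite (@sumn_map_P _ _ _ (game_ok m) (fun g => R _ g u v) 1) //; last first.
  by move=> g okg /=; rewrite count_map muln1 -HG.
rewrite (@sumn_map_P _ _ _ predT (fun a => (a == u) && (a == v)) (count (fun g => R _ g x y) S1)); last first.
- move=> a _ /=; rewrite count_map.
  rewrite (@eq_count _ _ (fun g => ((a == u) && (a == v)) && R _ g x y)); last by move=> g; apply: HH.
  by case: (_ && _) => /=; rewrite ?count_false ?mul1n.
- by apply/allP.
rewrite muln1; case: eqP => [<- | nuv].
  have -> : count (fun g => R _ g u u) S2 = 0.
    elim: S2 ok2 {HG} => //= g s IH /andP[okg oks]; by rewrite Hd // IH.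
  rewrite (@eq_count _ _ (pred1 u)); last by move=> a /=; rewrite andbb.
  by rewrite -enumT (count_uniq_mem _ (enum_uniq _)) mem_enum mul1n.
rewrite [X in _ + X * _](@eq_count _ _ (fun _ => false)); last first.
  by move=> a /=; case: (a =P u) => // ->; apply/negbTE/eqP.
by rewrite count_false addn0.
Qed.



Lemma inj_id n : injective (fun p : 'I_n * 'I_n => p).
Proof. by []. Qed.

Lemma inj_o n (L1 L2 : 'I_n -> 'I_n -> 'I_n) : orthogonal_ls L1 L2 ->
  injective (fun p : 'I_n * 'I_n => (L1 p.1 p.2, L2 p.1 p.2)).
Proof. by move=> ho [r c] [r' c'] /= [e1 e2]; case: (ho _ _ _ _ e1 e2) => -> ->. Qed.

Lemma inj_r2 n (L : 'I_n -> 'I_n -> 'I_n) : latin_square L ->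
  injective (fun p : 'I_n * 'I_n => (p.1, L p.1 p.2)).
Proof. by move=> [hr hc] [r c] [r' c'] /= [e1]; subst r' => /hr ->. Qed.

Lemma inj_r2' n (L : 'I_n -> 'I_n -> 'I_n) : latin_square L ->
  injective (fun p : 'I_n * 'I_n => (L p.1 p.2, p.1)).
Proof. by move=> [hr hc] [r c] [r' c'] /= [+ e1]; subst r' => /hr ->. Qed.

Lemma inj_c1 n (L : 'I_n -> 'I_n -> 'I_n) : latin_square L ->
  injective (fun p : 'I_n * 'I_n => (L p.1 p.2, p.2)).
Proof. by move=> [hr hc] [r c] [r' c'] /= [+ e1]; subst c' => /hc ->. Qed.

Lemma inj_c1' n (L : 'I_n -> 'I_n -> 'I_n) : latin_square L ->
  injective (fun p : 'I_n * 'I_n => (p.2, L p.1 p.2)).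
Proof. by move=> [hr hc] [r c] [r' c'] /= [e1]; subst c' => /hc ->. Qed.

Lemma okP m (g : mdgame m) : game_ok m g ->
  [/\ gm1 g != gm2 g, gw1 g != gw2 g, gm1 g != gw1 g, gm2 g != gw2 g &
      (gm1 g != gw2 g) /\ (gm2 g != gw1 g)].
Proof.
rewrite /game_ok /spouse !ltn_ord !andbT => /and5P [h1 h2 h3 h4 /andP[h5 h6]]; by split.
Qed.

Lemma cnt_partners m n L1 L2 S1 S2 (u v : 'I_m) (x y : 'I_n) :
  latin_square L1 -> latin_square L2 -> orthogonal_ls L1 L2 -> all (game_ok m) S2 ->
  count (fun g => partners g (enc u x) (enc v y)) (Tseq L1 L2 S1 S2)
  = if u == v then count (fun g => partners g x y) S1 else count (fun g => partners g u v) S2.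
Proof.
move=> h1 h2 ho ok2; apply: (@count_T _ _ _ _ _ _ (@partners)) => //.
- move=> g /okP [d1 d2 d3 d4 [d5 d6]].
  exact: (@count_or m n (gm1 g) (gw1 g) (gm2 g) (gw2 g) u v _ _ x y (@inj_id n) (inj_o ho) d1).
- by move=> a g; rewrite /partners /= !enc_eq; case: (a == u); case: (a == v); rewrite /= ?andbF.
- move=> g /okP [d1 d2 d3 d4 [d5 d6]]; apply/negbTE/negP; rewrite /partners.
  case/orP => /andP[/eqP e1 /eqP e2]; [move: d3 | move: d4]; by rewrite e1 e2 eqxx.
Qed.

Lemma cnt_oppmw m n L1 L2 S1 S2 (u v : 'I_m) (x y : 'I_n) :
  latin_square L1 -> latin_square L2 -> orthogonal_ls L1 L2 -> all (game_ok m) S2 ->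
  count (fun g => opp_mw g (enc u x) (enc v y)) (Tseq L1 L2 S1 S2)
  = if u == v then count (fun g => opp_mw g x y) S1 else count (fun g => opp_mw g u v) S2.
Proof.
move=> h1 h2 ho ok2; apply: (@count_T _ _ _ _ _ _ (@opp_mw)) => //.
- move=> g /okP [d1 d2 d3 d4 [d5 d6]].
  exact: (@count_or m n (gm1 g) (gw2 g) (gm2 g) (gw1 g) u v _ _ x y (inj_r2 h2) (inj_c1 h1) d1).
- by move=> a g; rewrite /opp_mw /= !enc_eq; case: (a == u); case: (a == v); rewrite /= ?andbF.
- move=> g /okP [d1 d2 d3 d4 [d5 d6]]; apply/negbTE/negP; rewrite /opp_mw.
  case/orP => /andP[/eqP e1 /eqP e2]; [move: d5 | move: d6]; by rewrite e1 e2 eqxx.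
Qed.

Lemma cnt_oppmm m n L1 L2 S1 S2 (u v : 'I_m) (x y : 'I_n) :
  latin_square L1 -> latin_square L2 -> orthogonal_ls L1 L2 -> all (game_ok m) S2 ->
  count (fun g => opp_mm g (enc u x) (enc v y)) (Tseq L1 L2 S1 S2)
  = if u == v then count (fun g => opp_mm g x y) S1 else count (fun g => opp_mm g u v) S2.
Proof.
move=> h1 h2 ho ok2; apply: (@count_T _ _ _ _ _ _ (@opp_mm)) => //.
- move=> g /okP [d1 d2 d3 d4 [d5 d6]].
  exact: (@count_or m n (gm1 g) (gm2 g) (gm2 g) (gm1 g) u v _ _ x y (inj_r2 h1) (inj_r2' h1) d1).
- by move=> a g; rewrite /opp_mm /= !enc_eq; case: (a == u); case: (a == v); rewrite /= ?andbF.
- move=> g /okP [d1 d2 d3 d4 [d5 d6]]; apply/negbTE/negP; rewrite /opp_mm.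
  case/orP => /andP[/eqP e1 /eqP e2]; move: d1; by rewrite e1 e2 eqxx.
Qed.

Lemma cnt_oppww m n L1 L2 S1 S2 (u v : 'I_m) (x y : 'I_n) :
  latin_square L1 -> latin_square L2 -> orthogonal_ls L1 L2 -> all (game_ok m) S2 ->
  count (fun g => opp_ww g (enc u x) (enc v y)) (Tseq L1 L2 S1 S2)
  = if u == v then count (fun g => opp_ww g x y) S1 else count (fun g => opp_ww g u v) S2.
Proof.
move=> h1 h2 ho ok2; apply: (@count_T _ _ _ _ _ _ (@opp_ww)) => //.
- move=> g /okP [d1 d2 d3 d4 [d5 d6]].
  exact: (@count_or m n (gw1 g) (gw2 g) (gw2 g) (gw1 g) u v _ _ x y (inj_c1' h2) (inj_c1 h2) d2).
- by move=> a g; rewrite /opp_ww /= !enc_eq; case: (a == u); case: (a == v); rewrite /= ?andbF.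
- move=> g /okP [d1 d2 d3 d4 [d5 d6]]; apply/negbTE/negP; rewrite /opp_ww.
  case/orP => /andP[/eqP e1 /eqP e2]; move: d2; by rewrite e1 e2 eqxx.
Qed.

Lemma ok_Gg m n k L1 L2 (g : mdgame m) (p : 'I_n * 'I_n) :
  game_ok m g -> game_ok (m * k) (Gg L1 L2 g p).
Proof.
move=> /okP [d1 d2 d3 d4 [d5 d6]].
rewrite /game_ok /spouse /= !enc_eq (negbTE d1) (negbTE d2) (negbTE d3)
  (negbTE d4) (negbTE d5) (negbTE d6).
done.
Qed.

Lemma ok_Hg m n k (a : 'I_m) (g : mdgame n) :
  game_ok k g -> game_ok (m * k) (Hg a g).
Proof. by rewrite /game_ok /spouse /= !enc_eq !eqxx !enc_lt. Qed.

Lemma spouse_enc m n k (u v : 'I_m) (x y : 'I_n) :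
  spouse (m * k) (enc u x) (enc v y) = (u == v) && spouse k x y.
Proof. by rewrite /spouse enc_eq enc_lt andbA. Qed.

Lemma spouse_m m (u v : 'I_m) : spouse m u v = (u == v).
Proof. by rewrite /spouse ltn_ord andbT. Qed.

Lemma all_imp (T : Type) (P Q : pred T) s : (forall x, Q x -> P x) -> all Q s -> all P s.
Proof. by move=> H; elim: s => //= x s IH /andP[/H -> /IH]. Qed.

Lemma all_flatten_map (A B : Type) (P : pred B) (Q : pred A) (f : A -> seq B) (s : seq A) :
  all Q s -> (forall a, Q a -> all P (f a)) -> all P (flatten (map f s)).
Proof. by move=> + H; elim: s => //= a s IH /andP[Qa Qs]; rewrite all_cat H // IH. Qed.

Theorem theorem9 (n k m : nat) :
  CMDRR_exists n k -> SAMDRR_exists m -> MOLS_pair_exists n ->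
  CMDRR_exists (m * n) (m * k).
Proof.
move=> [S1 [hk ok1 [P1 M1 W1 UM1 UW1]]] [S2 [_ ok2 [P2 M2 W2 _ _]]] [L1 [L2 [h1 h2 ho]]].
exists (Tseq L1 L2 S1 S2); split.
- by rewrite leq_mul2l hk orbT.
- rewrite all_cat; apply/andP; split; apply: all_flatten_map.
  + exact: ok2.
  + move=> g okg; rewrite all_map; apply: (@all_imp _ _ predT); [move=> p _; exact: ok_Gg | exact: all_predT].
  + exact: (all_predT (enum {: 'I_m})).
  + by move=> a _; rewrite all_map; apply: (all_imp _ ok1) => g; apply: ok_Hg.
split.
- move=> i j; case: (enc_surj i) => u [x ->]; case: (enc_surj j) => v [y ->].
  rewrite spouse_enc (cnt_partners _ _ _ _ _ h1 h2 ho ok2) (cnt_oppmw _ _ _ _ _ h1 h2 ho ok2).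
  case: (eqVneq u v) => [_ | nuv] /= hs; first exact: P1.
  by apply: P2; rewrite spouse_m.
- move=> i i'; case: (enc_surj i) => u [x ->]; case: (enc_surj i') => v [y ->].
  rewrite enc_lt enc_eq (cnt_oppmm _ _ _ _ _ h1 h2 ho ok2) => xk.
  case: (eqVneq u v) => [_ | nuv] /=; first by apply: M1.
  by move=> _; apply: M2; rewrite // eq_sym.
- move=> i i'; case: (enc_surj i) => u [x ->]; case: (enc_surj i') => v [y ->].
  rewrite enc_lt enc_eq (cnt_oppww _ _ _ _ _ h1 h2 ho ok2) => xk.
  case: (eqVneq u v) => [_ | nuv] /=; first by apply: W1.
  by move=> _; apply: W2; rewrite // eq_sym.
- move=> i; case: (enc_surj i) => u [x ->]; rewrite leqNgt enc_lt -leqNgt => kx.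
  have [x' [kx' nx' c2 c1]] := UM1 x kx.
  exists (enc u x'); split.
  + by rewrite leqNgt enc_lt -leqNgt.
  + by rewrite enc_eq eqxx.
  + by rewrite (cnt_oppmm _ _ _ _ _ h1 h2 ho ok2) eqxx.
  + move=> i''; case: (enc_surj i'') => v [y ->]; rewrite !enc_eq.
    rewrite (cnt_oppmm _ _ _ _ _ h1 h2 ho ok2).
    case: (eqVneq u v) => [_ | nuv] /=; first by apply: c1.
    by move=> _ _; apply: M2; rewrite // eq_sym.
- move=> i; case: (enc_surj i) => u [x ->]; rewrite leqNgt enc_lt -leqNgt => kx.
  have [x' [kx' nx' c2 c1]] := UW1 x kx.
  exists (enc u x'); split.
  + by rewrite leqNgt enc_lt -leqNgt.
  + by rewrite enc_eq eqxx.
  + by rewrite (cnt_oppww _ _ _ _ _ h1 h2 ho ok2) eqxx.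
  + move=> i''; case: (enc_surj i'') => v [y ->]; rewrite !enc_eq.
    rewrite (cnt_oppww _ _ _ _ _ h1 h2 ho ok2).
    case: (eqVneq u v) => [_ | nuv] /=; first by apply: c1.
    by move=> _ _; apply: W2; rewrite // eq_sym.
Qed.
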